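(* For any $(m,n)$-Dyck path $\Pi$, $\operatorname{maxtdinv}(\Pi) = \operatorname{tdinv}(PF)$ where $PF$ is the parking function supported by $\Pi$ with $\sigma(PF) = n \, \dots \, 2 \, \, 1$. In particular, \[ \operatorname{maxtdinv}(\Pi) = \sum_{c,c'} \chi(\rank(c) < \rank(c') < \rank(c)+m) \] where the sum is over parking spaces $c,c'$ in $\Pi$.
   Context: Let $m,n$ be positive integers. An $(m,n)$-Dyck path $\Pi$ is a lattice path of north and east steps from $(0,0)$ to $(m,n)$ staying weakly above the line $y=\frac{n}{m}x$. The cells directly east of (and adjacent to) north steps of $\Pi$ are called parking spaces. An $(m,n)$-parking function $PF$ supported by $\Pi$ (written $\Pi(PF)=\Pi$) is obtained by filling the parking spaces with the labels (''cars'') $1,\dots,n$, each used once, so that labels increase up each column. For a lattice point, $\rank(x,y)=my-nx+\lfloor \frac{x\gcd(m,n)}{m}\rfloor$; the rank of a cell (or of the car in it) is the rank of its southwest corner. The word $\sigma(PF)$ lists the cars in order from highest to lowest rank. Define $\operatorname{tdinv}(PF)=\sum_{\text{cars } i<j}\chi(\rank(i)<\rank(j)<\rank(i)+m)$ and $\operatorname{maxtdinv}(\Pi)=\max\{\operatorname{tdinv}(PF):\Pi(PF)=\Pi\}$. Here $\chi$ is the indicator function. *)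

(* Defs.v *)
From mathcomp Require Import all_boot all_order all_algebra all_fingroup.
Unset Strict Implicit. Unset Printing Implicit Defensive.
Import Order.TTheory GRing.Theory Num.Theory.

(* A lattice path is a sequence of steps: true = north step, false = east step. *)

Definition pt_x (p : seq bool) (i : nat) : nat := count negb (take i p).
Definition pt_y (p : seq bool) (i : nat) : nat := count id (take i p).

(* (m,n)-Dyck path: from (0,0) to (m,n), weakly above y = (n/m) x,
   i.e. every lattice point (x,y) on the path satisfies n*x <= m*y. *)
Definition is_dyck (m n : nat) (p : seq bool) : bool :=
  [&& count negb p == m, count id p == n &
      all (fun i => n * pt_x p i <= m * pt_y p i) (iota 0 (size p).+1)].

Fixpoint north_xs (x : nat) (p : seq bool) : seq nat :=
  match p with
  | [::] => [::]
  | true :: p' => x :: north_xs x p'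
  | false :: p' => north_xs x.+1 p'
  end.

(* The parking space in row y (0-based) has southwest corner (space_x p y, y). *)
Definition space_x (p : seq bool) (y : nat) : nat := nth 0 (north_xs 0 p) y.

Definition rank (m n : nat) (x y : nat) : int :=
  ((m * y)%:Z - (n * x)%:Z + ((x * gcdn m n) %/ m)%:Z)%R.

Definition space_rank (m n : nat) (p : seq bool) (y : nat) : int :=
  rank m n (space_x p y) y.

(* A parking function supported by p: the filling f sending the parking space
   in row y : 'I_n to the car (f y) + 1 (cars 1..n are encoded as 'I_n,
   car k being encoded by k-1). *)
Definition is_pf (n : nat) (p : seq bool) (f : {perm 'I_n}) : bool :=
  [forall y : 'I_n, forall y' : 'I_n,
     ((y < y') && (space_x p y == space_x p y')) ==> (f y < f y')].

Definition car_rank (m n : nat) (p : seq bool) (f : {perm 'I_n}) (i : 'I_n) : int :=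
  space_rank m n p (f^-1 i)%g.

Definition sigma (m n : nat) (p : seq bool) (f : {perm 'I_n}) : seq nat :=
  map (fun i : 'I_n => (i : nat).+1)
      (sort (fun i j => (car_rank m n p f j <= car_rank m n p f i)%R) (enum 'I_n)).

Definition tdinv (m n : nat) (p : seq bool) (f : {perm 'I_n}) : nat :=
  \sum_(i : 'I_n) \sum_(j : 'I_n | i < j)
     ((car_rank m n p f i < car_rank m n p f j)%R &&
      (car_rank m n p f j < car_rank m n p f i + m%:Z)%R : nat).

Definition maxtdinv (m n : nat) (p : seq bool) : nat :=
  \max_(f : {perm 'I_n} | is_pf n p f) tdinv m n p f.

(* Main.v *)
Require Import Defs.
From mathcomp Require Import all_boot all_order all_algebra all_fingroup.
From mathcomp Require Import zify.
Import Order.TTheory GRing.Theory Num.Theory.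

Lemma aux_eq m1 n1 a a' y y' : 0 < m1 -> coprime m1 n1 -> a <= a' ->
  a %/ m1 = a' %/ m1 -> m1*y + n1*a' = m1*y' + n1*a -> a = a'.
Proof.
move=> m10 cop aa' qq F.
have h1 : a * n1 <= a' * n1 by rewrite leq_mul2r aa' orbT.
have E : (a' - a) * n1 = (y' - y) * m1 by rewrite !mulnBl; lia.
have : m1 %| (a' - a) * n1 by rewrite E dvdn_mull.
rewrite Gauss_dvdl // => /dvdnP[k Hk].
have Ha' : a' = k * m1 + a by rewrite -Hk subnK.
move: qq; rewrite Ha' divnMDl // => qq.
have k0 : k = 0 by lia.
by rewrite k0.
Qed.

Lemma rank_inj m n a a' y y' : 0 < m -> a < m -> a' < m ->
  rank m n a y = rank m n a' y' -> y = y'.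
Proof.
move=> m0 am a'm.
rewrite /rank.
set d := gcdn m n.
have d0 : 0 < d by rewrite gcdn_gt0 m0.
set m1 := m %/ d. set n1 := n %/ d.
have Hm : m = m1 * d by rewrite divnK // dvdn_gcdl.
have Hn : n = n1 * d by rewrite divnK // dvdn_gcdr.
have m10 : 0 < m1 by move: m0; rewrite Hm muln_gt0 => /andP[].
have cop : coprime m1 n1.
  rewrite /coprime; apply/eqP.
  have : d = gcdn m1 n1 * d by rewrite muln_gcdl -Hm -Hn.
  by move/eqP; rewrite -{1}[d]mul1n eqn_pmul2r // eq_sym => /eqP.
have ga : a * d %/ m = a %/ m1 by rewrite {1}Hm divnMr.
have ga' : a' * d %/ m = a' %/ m1 by rewrite {1}Hm divnMr.
have qd : a %/ m1 < d by rewrite ltn_divLR // mulnC -Hm.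
have qd' : a' %/ m1 < d by rewrite ltn_divLR // mulnC -Hm.
rewrite ga ga'.
move=> H.
have [q eq] : {q | a %/ m1 = q} by exists (a %/ m1).
have [q' eq'] : {q | a' %/ m1 = q} by exists (a' %/ m1).
rewrite eq eq' in H qd qd'.
have E : m * y + n * a' + q = m * y' + n * a + q' by lia.
have E2 : (m1 * y + n1 * a') * d + q = (m1 * y' + n1 * a) * d + q'.
  by rewrite !mulnDl -!mulnA [y * d]mulnC [a' * d]mulnC [y' * d]mulnC [a * d]mulnC !mulnA -Hm -Hn.
have qq : q = q'.
  by move: (congr1 (modn^~ d) E2) => /=; rewrite !modnMDl !modn_small.
move: E2; rewrite qq => /addIn /eqP; rewrite eqn_pmul2r // => /eqP F.
have aa : a = a'.
  case: (leqP a a') => h.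
    apply: (@aux_eq m1 n1 a a' y y' m10 cop h) => //. by rewrite eq eq' qq.
  symmetry; apply: (@aux_eq m1 n1 a' a y' y m10 cop (ltnW h)); first by rewrite eq eq' qq.
  by rewrite F.
subst a'.
have : m * y = m * y' by lia.
by move/eqP; rewrite eqn_pmul2l // => /eqP.
Qed.
Lemma north_pt (p : seq bool) x y : y < count id p ->
  exists i, [/\ i <= size p, pt_y p i = y & x + pt_x p i = nth 0 (north_xs x p) y].
Proof.
elim: p x y => [|b p IH] x y //=.
case: b => /=.
- case: y => [|y] Hy.
    by exists 0; rewrite /pt_y /pt_x /= addn0.
  have [i [Hi Hy' Hx]] := IH x y Hy.
  exists i.+1; split => //.
    by rewrite /pt_y /= -Hy'.
- move=> Hy; have [i [Hi Hy' Hx]] := IH x.+1 y Hy.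
  exists i.+1; split => //.
  rewrite -Hx /pt_x /=; lia.
Qed.

Lemma space_lt (m n : nat) p y : 0 < m -> is_dyck m n p -> y < n -> space_x p y < m.
Proof.
move=> m0 /and3P[_ /eqP Hn /allP Ha] yn.
have Hy0 : y < count id p by rewrite Hn.
have [i [Hi Hy Hx]] := @north_pt p 0 y Hy0.
have := Ha i; rewrite mem_iota /= ltnS Hi => /(_ isT).
rewrite Hy /space_x -Hx add0n => H.
have n0 : 0 < n by apply: leq_ltn_trans yn.
have : n * pt_x p i < n * m by apply: (leq_ltn_trans H); rewrite [n * m]mulnC ltn_pmul2l.
by rewrite ltn_pmul2l.
Qed.

Lemma map_succ_enum n : map (fun i : 'I_n => (i:nat).+1) (enum 'I_n) = iota 1 n.
Proof.
have -> : (fun i : 'I_n => (i:nat).+1) = succn \o val by [].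
by rewrite map_comp val_enum_ord (iotaDl 1 0).
Qed.

Lemma sort_rev n (cr : 'I_n -> int) : (forall i j : 'I_n, i < j -> (cr i < cr j)%R) ->
  sort (fun i j => (cr j <= cr i)%R) (enum 'I_n) = rev (enum 'I_n).
Proof.
move=> mono; apply: (@sorted_eq _ (fun i j : 'I_n => (cr j <= cr i)%R)).
- by move=> a b c h1 h2; exact: le_trans h2 h1.
- move=> a b /andP[h1 h2]; apply: val_inj.
  case: (ltngtP a b) => // h.
  + by have := mono _ _ h; rewrite ltNge h1.
  + by have := mono _ _ h; rewrite ltNge h2.
- by apply: sort_sorted => a b; exact: le_total.
- rewrite rev_sorted.
  apply: (@sub_sorted _ (relpre val ltn)).
    by move=> a b /= /mono /ltW.
  by rewrite -sorted_map val_enum_ord iota_ltn_sorted.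
- by rewrite perm_sort perm_sym perm_rev.
Qed.

Lemma sort_rev_inv n (cr : 'I_n -> int) :
  sort (fun i j => (cr j <= cr i)%R) (enum 'I_n) = rev (enum 'I_n) ->
  forall i j : 'I_n, i < j -> (cr i <= cr j)%R.
Proof.
move=> H i j hij.
have := sort_sorted (fun a b => le_total (cr b) (cr a)) (enum 'I_n).
rewrite H rev_sorted => Hs.
have tr : transitive (fun z x : 'I_n => (cr z <= cr x)%R).
  by move=> a b c h1 h2; exact: le_trans h1 h2.
have := sorted_ltn_nth tr i Hs.
move=> /(_ i j); rewrite !nth_ord_enum; apply => //; rewrite inE size_enum_ord ltn_ord //.
Qed.

Lemma tdinv_reindex m n p (f : {perm 'I_n}) :
  \sum_(c : 'I_n) \sum_(c' : 'I_n)
      ((space_rank m n p c < space_rank m n p c')%R &&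
       (space_rank m n p c' < space_rank m n p c + m%:Z)%R : nat) =
  \sum_(i : 'I_n) \sum_(j : 'I_n)
      ((car_rank m n p f i < car_rank m n p f j)%R &&
       (car_rank m n p f j < car_rank m n p f i + m%:Z)%R : nat).
Proof.
rewrite (reindex_inj (@perm_inj _ (f^-1)%g)); apply: eq_bigr => i _.
by rewrite (reindex_inj (@perm_inj _ (f^-1)%g)).
Qed.

Lemma tdinv_le m n p (f : {perm 'I_n}) :
  tdinv m n p f <= \sum_(c : 'I_n) \sum_(c' : 'I_n)
      ((space_rank m n p c < space_rank m n p c')%R &&
       (space_rank m n p c' < space_rank m n p c + m%:Z)%R : nat).
Proof.
rewrite (tdinv_reindex m n p f) /tdinv; apply: leq_sum => i _.
rewrite [X in _ <= X](bigID (fun j : 'I_n => i < j)) /=.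
exact: leq_addr.
Qed.

Lemma tdinv_eq m n p (f : {perm 'I_n}) :
  (forall i j : 'I_n, i < j -> (car_rank m n p f i <= car_rank m n p f j)%R) ->
  tdinv m n p f = \sum_(c : 'I_n) \sum_(c' : 'I_n)
      ((space_rank m n p c < space_rank m n p c')%R &&
       (space_rank m n p c' < space_rank m n p c + m%:Z)%R : nat).
Proof.
move=> mono.
rewrite (tdinv_reindex m n p f) /tdinv; apply: eq_bigr => i _.
rewrite [RHS](bigID (fun j : 'I_n => i < j)) /= [X in _ = _ + X]big1 ?addn0 //.
move=> j hj.
have h : (car_rank m n p f j <= car_rank m n p f i)%R.
  move: hj; rewrite -leqNgt leq_eqVlt => /orP[/eqP/val_inj -> // | /mono //].
by rewrite ltNge h.
Qed.

Lemma exists_pf m n p : 0 < m -> is_dyck m n p ->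
  exists f : {perm 'I_n}, is_pf n p f /\
    (forall i j : 'I_n, i < j -> (car_rank m n p f i < car_rank m n p f j)%R).
Proof.
move=> m0 D.
pose r (y : 'I_n) := space_rank m n p y.
have rinj : injective r.
  move=> a b H; apply: val_inj.
  exact: (rank_inj m n (space_x p a) (space_x p b) a b m0
            (space_lt m n p a m0 D (ltn_ord a)) (space_lt m n p b m0 D (ltn_ord b)) H).
pose cnt (y : 'I_n) := #|[set y' | (r y' < r y)%R]|.
have cnt_lt y : cnt y < n.
  rewrite -[n in _ < n]card_ord -cardsT; apply: proper_card; apply/properP; split.
    exact: subsetT.
  by exists y; rewrite ?inE // ltxx.
have cnt_mono a b : (r a < r b)%R -> cnt a < cnt b.
  move=> h; apply: proper_card; apply/properP; split.
    by apply/subsetP => z; rewrite !inE => hz; exact: lt_trans hz h.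
  by exists a; rewrite !inE ?h ?ltxx.
have cnt_refl a b : cnt a < cnt b -> (r a < r b)%R.
  move=> h; case: (ltgtP (r a) (r b)) => // h'.
  - by move: (cnt_mono _ _ h'); rewrite ltnNge (ltnW h).
  - by move: h; rewrite (rinj _ _ h') ltnn.
pose g y := Ordinal (cnt_lt y).
have ginj : injective g.
  move=> a b /(congr1 val) /= hab.
  case: (ltgtP (r a) (r b)) => h.
  - by move: (cnt_mono _ _ h); rewrite hab ltnn.
  - by move: (cnt_mono _ _ h); rewrite hab ltnn.
  - exact: rinj.
exists (perm ginj); split.
- apply/forallP => y; apply/forallP => y'; apply/implyP => /andP[hy hx].
  rewrite !permE /=; apply: cnt_mono.
  rewrite /r /space_rank (eqP hx) /rank.
  have : m * y < m * y' by rewrite ltn_pmul2l.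
  lia.
- move=> i j hij; rewrite /car_rank.
  have Hi k : cnt ((perm ginj)^-1 k)%g = k.
    by have := permKV (perm ginj) k; rewrite permE => /(congr1 val).
  apply: cnt_refl; by rewrite !Hi.
Qed.

Theorem lemma1 (m n : nat) (p : seq bool) :
  0 < m -> 0 < n -> is_dyck m n p ->
  (exists f : {perm 'I_n}, is_pf n p f /\ sigma m n p f = rev (iota 1 n)) /\
  (forall f : {perm 'I_n}, is_pf n p f -> sigma m n p f = rev (iota 1 n) ->
     maxtdinv m n p = tdinv m n p f) /\
  maxtdinv m n p =
    \sum_(c : 'I_n) \sum_(c' : 'I_n)
      ((space_rank m n p c < space_rank m n p c')%R &&
       (space_rank m n p c' < space_rank m n p c + m%:Z)%R : nat).
Proof.
move=> m0 n0 D.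
have [f0 [pf0 mono0]] := exists_pf m n p m0 D.
have Hmax : maxtdinv m n p =
    \sum_(c : 'I_n) \sum_(c' : 'I_n)
      ((space_rank m n p c < space_rank m n p c')%R &&
       (space_rank m n p c' < space_rank m n p c + m%:Z)%R : nat).
  apply/eqP; rewrite eqn_leq; apply/andP; split.
    by apply/bigmax_leqP => f _; exact: tdinv_le.
  rewrite -(tdinv_eq m n p f0); last by move=> i j /mono0 /ltW.
  exact: (@leq_bigmax_cond _ (fun f => is_pf n p f) (tdinv m n p) f0 pf0).
split; last split => //.
- exists f0; split => //.
  by rewrite /sigma (sort_rev n (car_rank m n p f0) mono0) map_rev map_succ_enum.
- move=> f _ Hs.
  rewrite Hmax (tdinv_eq m n p f) //.
  apply: (sort_rev_inv n (car_rank m n p f)).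
  apply: (@inj_map _ _ (fun i : 'I_n => (i:nat).+1)).
    by move=> a b /= /succn_inj /val_inj.
  by rewrite map_rev map_succ_enum -Hs.
Qed.
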